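(* Let $M=(I,O,T,t_0,\tau,\mathit{out})$ be a Moore system and let $A=(2^{I\cup O},Q,q_0,\delta,\mathit{acc})$ be a nondeterministic word automaton with transition relation $\delta\subseteq Q\times 2^{I\cup O}\times Q$. Let $D$ be a totally ordered set, let $\triangleright\subseteq Q\times D\times D$ be a rank comparison relation (write $d\triangleright_q d'$ for $(q,d,d')\in\triangleright$), and let $\rho:Q\times T\to D$ be a ranking function. Define the formula, with a free function symbol $\mathit{rch}:Q\times T\to\{\mathit{true},\mathit{false}\}$, $$\Phi^{GR}_{\mathsf E}(M,A)=\mathit{rch}(q_0,t_0)\wedge\bigwedge_{(q,t)\in Q\times T}\Big[\mathit{rch}(q,t)\rightarrow\bigvee_{(q,\,i\cup o,\,q')\in\delta}\big(\mathit{out}(t)=o\wedge \mathit{rch}(q',\tau(t,i))\wedge \rho(q,t)\triangleright_q\rho(q',\tau(t,i))\big)\Big],$$ where $i\in 2^I$, $o\in 2^O$. Then $\Phi^{GR}_{\mathsf E}(M,A)$ is satisfiable using $\rho$ and $D$ (i.e., there is an interpretation of $\mathit{rch}$ making it true for the given $\rho$) if and only if the product $M\otimes A_{\mathsf E}$ has an infinite path $(q_1,t_1)(q_2,t_2)\dots$ that satisfies $\triangleright$ using $\rho$ and $D$, i.e., $\rho(q_j,t_j)\triangleright_{q_j}\rho(q_{j+1},t_{j+1})$ for every $j\ge 1$.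
   Context: A Moore system $M=(I,O,T,t_0,\tau,\mathit{out})$ has disjoint finite sets of inputs $I$ and outputs $O$, finite state set $T$, initial state $t_0$, total transition function $\tau:T\times 2^I\to T$ and output labelling $\mathit{out}:T\to 2^O$. The product $M\otimes A_{\mathsf E}$ is the graph with vertices $Q\times T$, initial vertex $(q_0,t_0)$, and an edge from $(q,t)$ to $(q',\tau(t,i))$ whenever $(q,i\cup o,q')\in\delta$ with $o=\mathit{out}(t)$ and $i\in 2^I$; paths of the product start at the initial vertex $(q_0,t_0)$. *)

(* Defs.v *)
From mathcomp Require Import all_boot all_order.
Set Implicit Arguments. Unset Strict Implicit. Unset Printing Implicit Defensive.

(* Atomic propositions AP (a finite type); inputs I and outputs O are
   disjoint subsets of AP. Letters of 2^(I u O) are sets {set AP}.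
   Moore system: finite states T, initial t0, transition tau (applied to
   inputs i \subset I), output labelling out (with out t \subset O).
   Automaton: finite states Q, initial q0, transition relation delta
   (delta q a q' = true iff (q,a,q') in delta). *)

Definition PhiGR_E (AP Q T : finType) (D : Type) (I O : {set AP})
  (t0 : T) (tau : T -> {set AP} -> T) (out : T -> {set AP})
  (q0 : Q) (delta : Q -> {set AP} -> Q -> bool)
  (rank_rel : Q -> D -> D -> bool) (rho : Q -> T -> D)
  (rch : Q -> T -> bool) : Prop :=
  rch q0 t0 /\
  forall (q : Q) (t : T), rch q t ->
    exists (i o : {set AP}) (q' : Q),
      [/\ i \subset I, o \subset O, delta q (i :|: o) q' & out t = o] /\
      rch q' (tau t i) /\ rank_rel q (rho q t) (rho q' (tau t i)).

Definition prod_edge (AP Q T : finType) (I : {set AP})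
  (tau : T -> {set AP} -> T) (out : T -> {set AP})
  (delta : Q -> {set AP} -> Q -> bool) (v w : Q * T) : Prop :=
  exists i : {set AP}, [/\ i \subset I, delta v.1 (i :|: out v.2) w.1 & w.2 = tau v.2 i].

Definition has_ranked_path (AP Q T : finType) (D : Type) (I : {set AP})
  (t0 : T) (tau : T -> {set AP} -> T) (out : T -> {set AP})
  (q0 : Q) (delta : Q -> {set AP} -> Q -> bool)
  (rank_rel : Q -> D -> D -> bool) (rho : Q -> T -> D) : Prop :=
  exists p : nat -> Q * T,
    p 0 = (q0, t0) /\
    forall j : nat,
      prod_edge I tau out delta (p j) (p j.+1) /\
      rank_rel (p j).1 (rho (p j).1 (p j).2) (rho (p j.+1).1 (p j.+1).2).

(* Main.v *)
Require Import Defs.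
From mathcomp Require Import all_boot all_order.
From Stdlib Require Import ClassicalEpsilon.

Theorem mainTheorem1
  (AP : finType) (I O : {set AP}) (HIO : [disjoint I & O])
  (T : finType) (t0 : T) (tau : T -> {set AP} -> T) (out : T -> {set AP})
  (Hout : forall t, out t \subset O)
  (Q : finType) (q0 : Q) (delta : Q -> {set AP} -> Q -> bool)
  (disp : Order.disp_t) (D : orderType disp)
  (rank_rel : Q -> D -> D -> bool) (rho : Q -> T -> D) :
  (exists rch : Q -> T -> bool,
      PhiGR_E I O t0 tau out q0 delta rank_rel rho rch) <->
  has_ranked_path I t0 tau out q0 delta rank_rel rho.
Proof.
split.
- move=> [rch [H0 Hs]].
  pose P (v : Q * T) (x : {set AP} * Q) :=
    [&& x.1 \subset I, delta v.1 (x.1 :|: out v.2) x.2,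
        rch x.2 (tau v.2 x.1) & rank_rel v.1 (rho v.1 v.2) (rho x.2 (tau v.2 x.1))].
  pose step (v : Q * T) : Q * T :=
    if [pick x | P v x] is Some x then (x.2, tau v.2 x.1) else v.
  have Hstep : forall v, rch v.1 v.2 ->
     [/\ prod_edge I tau out delta v (step v), rch (step v).1 (step v).2 &
         rank_rel v.1 (rho v.1 v.2) (rho (step v).1 (step v).2)].
    move=> [q t] /= Hr.
    rewrite /step; case: pickP => [[i q'] /and4P /= [h1 h2 h3 h4]|Hn].
      by split => //; exists i.
    exfalso; have [i [o [q' [[h1 h2 h3 h4] [h5 h6]]]]] := Hs q t Hr.
    subst o; have := Hn (i, q'); by rewrite /P /= h1 h3 h5 h6.
  exists (fun n => iter n step (q0, t0)); split => // j.
  have Hr : forall n, rch (iter n step (q0, t0)).1 (iter n step (q0, t0)).2.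
    elim => [|n IH] //=; by case: (Hstep _ IH).
  by case: (Hstep _ (Hr j)) => a _ c; split.
- move=> [p [Hp0 Hp]].
  pose rch (q : Q) (t : T) : bool :=
    if excluded_middle_informative (exists j, p j = (q, t)) then true else false.
  have rchE : forall q t, rch q t <-> exists j, p j = (q, t).
    move=> q t; rewrite /rch; case: excluded_middle_informative => h.
      by split.
    by split => // [[j e]]; exfalso; apply: h; exists j.
  exists rch; split; first by apply/rchE; exists 0.
  move=> q t /rchE [j ej].
  have [[i [h1 h2 h3]] hr] := Hp j.
  rewrite ej /= in h2 h3 hr.
  exists i, (out t), (p j.+1).1; split; first by split => //.
  rewrite -h3; split; last by [].
  apply/rchE; exists j.+1; by case: (p j.+1).
Qed.
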